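(* Every locally Menger Hausdorff $P$-space can be densely embedded in a Menger Hausdorff $P$-space.
   Context: A space $X$ is Menger if for each sequence $(\mathcal{U}_n)$ of open covers of $X$ there is a sequence $(\mathcal{V}_n)$ with each $\mathcal{V}_n$ a finite subset of $\mathcal{U}_n$ and $\bigcup_{n}\bigcup\mathcal{V}_n=X$. A space $X$ is locally Menger if for each $x\in X$ there exist an open set $U$ and a Menger subspace $Y$ of $X$ with $x\in U\subseteq Y$. A $P$-space is a space in which every countable intersection of open sets is open. *)

(* Defs.v *)
From mathcomp Require Import all_boot all_order all_algebra.
From mathcomp Require Import all_classical all_reals all_analysis.
Set Implicit Arguments. Unset Strict Implicit. Unset Printing Implicit Defensive.
Local Open Scope classical_set_scope.

(* A subspace Y of X is Menger: for every sequence (U_n) of covers of Y by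
   open sets of X (equivalently, by traces of such, i.e. open covers of the
   subspace Y), there are finite V_n ⊆ U_n with ⋃_n ⋃ V_n ⊇ Y. *)
Definition menger_set (X : topologicalType) (Y : set X) : Prop :=
  forall U : nat -> set (set X),
    (forall n, forall W, U n W -> open W) ->
    (forall n, Y `<=` \bigcup_(W in U n) W) ->
    exists V : nat -> set (set X),
      (forall n, finite_set (V n) /\ V n `<=` U n) /\
      Y `<=` \bigcup_n \bigcup_(W in V n) W.

Definition menger_space (X : topologicalType) : Prop := menger_set [set: X].

Definition locally_menger (X : topologicalType) : Prop :=
  forall x : X, exists (U Y : set X), open U /\ menger_set Y /\ U x /\ U `<=` Y.

Definition P_space (X : topologicalType) : Prop :=
  forall U : nat -> set X, (forall n, open (U n)) -> open (\bigcap_n U n).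

Definition embedding (X Y : topologicalType) (f : X -> Y) : Prop :=
  injective f /\ continuous f /\
  forall U : set X, open U -> exists W : set Y, open W /\ f @` U = W `&` range f.

Definition dense_embedding (X Y : topologicalType) (f : X -> Y) : Prop :=
  embedding f /\ dense (range f).

(* Main.v *)
From HB Require Import structures.
Require Import Defs.
From mathcomp Require Import all_boot all_order all_algebra.
From mathcomp Require Import all_classical all_reals all_analysis.
Local Open Scope classical_set_scope.
Lemma menger_bigcup (X : topologicalType) (M : nat -> set X) :
  (forall k, menger_set (M k)) -> menger_set (\bigcup_k M k).
Proof.
move=> HM U Uo Ucov.
have H : forall k, exists V : nat -> set (set X),
    (forall n, finite_set (V n) /\ V n `<=` U (pickle (k, n))) /\
    M k `<=` \bigcup_n \bigcup_(W in V n) W.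
  move=> k; apply: (HM k (fun n => U (pickle (k, n)))).
    by move=> n; apply: Uo.
  by move=> n x Mx; apply: Ucov; exists k.
have [Vk HVk] := choice H.
exists (fun m => match (pickle_inv m : option (nat * nat)) with Some kn => Vk kn.1 kn.2 | None => set0 end).
split.
  move=> m; have Em := @pickle_invK (nat * nat)%type m.
  destruct (pickle_inv m) as [[k n]|]; last first.
    by split; [exact: finite_set0|].
  rewrite /= in Em.
  have [/(_ n) [fin sub] _] := HVk k.
  by split=> //; rewrite -Em.
move=> x [k _ Mx].
have [_ /(_ x Mx) [n _ [W VW Wx]]] := HVk k.
exists (pickle (k, n)) => //; rewrite pickleK_inv /=.
by exists W.
Qed.

Lemma fin_sep (X : topologicalType) (x : X) (F : set (set X)) :
  finite_set F ->
  (forall B, F B -> exists A, open A /\ A x /\ A `&` B = set0) ->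
  exists A, open A /\ A x /\ forall B, F B -> A `&` B = set0.
Proof.
move=> /finite_seqP [s ->]; elim: s => [|b s IH] H.
  by exists setT; split; [exact: openT|split=> // B /=; rewrite in_nil].
have [A1 [oA1 [A1x A1b]]] := H b (mem_head _ _).
have [A2 [oA2 [A2x A2s]]] : exists A, open A /\ A x /\ forall B, [set` s] B -> A `&` B = set0.
  by apply: IH => B /= Bs; apply: H; rewrite /= in_cons Bs orbT.
exists (A1 `&` A2); split; first exact: openI.
split=> // B /=; rewrite in_cons => /orP [/eqP ->|Bs].
  by rewrite setIAC A1b set0I.
by rewrite -setIA A2s // setI0.
Qed.

Lemma menger_closed (X : topologicalType) (M : set X) :
  hausdorff_space X -> P_space X -> menger_set M -> closed M.
Proof.
move=> hX hP HM.
have key : forall x, ~ M x -> exists A, open A /\ A x /\ A `&` M = set0.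
  move=> x Mx.
  pose U := fun (_ : nat) => [set B : set X | open B /\ exists A, open A /\ A x /\ A `&` B = set0].
  have [V [HV Vcov]] : exists V : nat -> set (set X),
      (forall n, finite_set (V n) /\ V n `<=` U n) /\
      M `<=` \bigcup_n \bigcup_(W in V n) W.
    apply: HM; first by move=> n W [].
    move=> n y My.
    have xy : x != y by apply/eqP => exy; apply: Mx; rewrite exy.
    move: hX; rewrite open_hausdorff => /(_ x y xy) [[A B] [xA yB] [oA oB /eqP AB]].
    exists B; last by move: yB; rewrite inE.
    split=> //; exists A; split=> //; split=> //; by move: xA; rewrite inE.
  have H : forall n, exists A, open A /\ A x /\ forall B, V n B -> A `&` B = set0.
    move=> n; have [fin sub] := HV n; apply: fin_sep => // B VB; have [_ ?] := sub B VB; done.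
  have [An HAn] := choice H.
  exists (\bigcap_n An n); split; first by apply: hP => n; have [] := HAn n.
  split; first by move=> n _; have [_ []] := HAn n.
  apply/seteqP; split=> [y [Ay My]|//].
  have [n _ [W VW Wy]] := Vcov y My.
  have [_ [_ HW]] := HAn n.
  have : (An n `&` W) y by split=> //; apply: Ay.
  by rewrite HW.
rewrite -openC.
have -> : ~` M = \bigcup_(A in [set A | open A /\ A `&` M = set0]) A.
  apply/seteqP; split=> [x Mx|y [A [oA AM] Ay] My].
    by have [A [oA [Ax AM]]] := key x Mx; exists A.
  by have : (A `&` M) y by []; rewrite AM.
by apply: bigcup_open => A [].
Qed.


Definition lind (X : topologicalType) : Type := option X.

Section Lind.
Context {X : topologicalType}.

HB.instance Definition _ := Choice.on (lind X).

Definition lop (O : set (lind X)) : Prop :=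
  open (Some @^-1` O) /\
  (O None -> exists K : set X, closed K /\ menger_set K /\ ~` K `<=` Some @^-1` O).

Lemma menger0 : menger_set (set0 : set X).
Proof.
move=> U _ _; exists (fun _ => set0); split=> //.
by move=> n; split; [exact: finite_set0|].
Qed.

Lemma lopT : lop setT.
Proof.
split; first exact: openT.
move=> _; exists set0; split; first exact: closed0.
by split; [exact: menger0|].
Qed.

Lemma lopI : setI_closed lop.
Proof.
move=> A B [oA hA] [oB hB]; split; first exact: openI.
move=> [/hA [KA [cA [mA sA]]] /hB [KB [cB [mB sB]]]].
exists (KA `|` KB); split; first exact: closedU.
split.
  have -> : KA `|` KB = \bigcup_k (if k is 0 then KA else KB).
    apply/seteqP; split=> [x [KAx|KBx]|x [[|k] _ Kx]]; [by exists 0|by exists 1|by left|by right].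
  by apply: menger_bigcup => -[|k].
move=> x /= nK; split; [apply: sA|apply: sB] => Kx; apply: nK; by [left|right].
Qed.

Lemma lop_bigU (I : Type) (f : I -> set (lind X)) :
  (forall i, lop (f i)) -> lop (\bigcup_i f i).
Proof.
move=> H; split.
  by apply: bigcup_open => i _; have [] := H i.
move=> [i _ fiN]; have [_ /(_ fiN) [K [cK [mK sK]]]] := H i.
exists K; split=> //; split=> // x /sK fx; by exists i.
Qed.

HB.instance Definition _ := isOpenTopological.Build (lind X) lopT lopI lop_bigU.

Lemma lindE (O : set (lind X)) : open O = lop O.
Proof. by []. Qed.

End Lind.


Section Main.
Context {X : topologicalType}.
Hypotheses (hL : locally_menger X) (hX : hausdorff_space X) (hP : P_space X).

Lemma trace_img (A : set X) : Some @^-1` (Some @` A : set (lind X)) = A.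
Proof.
apply/seteqP; split=> [x [y Ay [<-]]//|x Ax]; by exists x.
Qed.

Lemma open_img (A : set X) : open A -> open (Some @` A : set (lind X)).
Proof.
move=> oA; rewrite lindE; split; first by rewrite trace_img.
by move=> [y _].
Qed.

Lemma lind_P : P_space (lind X).
Proof.
move=> U oU; rewrite lindE; split.
  apply: (hP (fun n => Some @^-1` U n)) => n.
  by have := oU n; rewrite lindE => -[].
move=> UN.
have H : forall n, exists K : set X, closed K /\ menger_set K /\ ~` K `<=` Some @^-1` U n.
  by move=> n; have := oU n; rewrite lindE => -[_]; apply; apply: UN.
have [Kn HK] := choice H.
exists (\bigcup_n Kn n); split.
  rewrite -openC setC_bigcup; apply: hP => n.
  by apply: closed_openC; have [] := HK n.
split; first by apply: menger_bigcup => n; have [_ []] := HK n.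
move=> x nK n _; have [_ [_ sK]] := HK n; apply: sK => Kx; apply: nK.
by exists n.
Qed.

Lemma sep_None (x : X) : exists A B : set (lind X),
  [/\ open A, open B, A (Some x), B None & A `&` B = set0].
Proof.
have [U [M [oU [mM [Ux sUM]]]]] := hL x.
have cM := @menger_closed X M hX hP mM.
exists (Some @` U), (fun o => match o with None => True | Some y => ~ M y end).
split.
- exact: open_img.
- rewrite lindE; split; first exact: closed_openC.
  by move=> _; exists M; split=> //; split.
- by exists x.
- by [].
- by apply/seteqP; split=> // o [[u Uu <-]] /=; apply; apply: sUM.
Qed.

Lemma lind_hausdorff : hausdorff_space (lind X).
Proof.
rewrite open_hausdorff => -[x|] [y|] neq.
- have xy : x != y by apply: contra neq => /eqP ->.
  move: hX; rewrite open_hausdorff => /(_ x y xy) [[A B] [xA yB] [oA oB /eqP AB]].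
  exists (Some @` A, Some @` B) => /=.
    by split; rewrite inE; [exists x => //; rewrite -inE|exists y => //; rewrite -inE].
  split; [exact: open_img|exact: open_img|].
  apply/eqP/seteqP; split=> // o [[a Aa <-]] [b Bb [ba]].
  rewrite /= in AB; have : (A `&` B) a by split=> //; rewrite -ba.
  by rewrite AB.
- have [A [B [oA oB Ax BN AB]]] := sep_None x.
  by exists (A, B) => /=; [rewrite !inE|split=> //; apply/eqP].
- have [A [B [oA oB Ay BN AB]]] := sep_None y.
  by exists (B, A) => /=; [rewrite !inE|split=> //; rewrite setIC; apply/eqP].
- by rewrite eqxx in neq.
Qed.

Lemma lind_menger : menger_space (lind X).
Proof.
move=> U oU Ucov.
have [W0 U0W0 W0N] := Ucov 0 None I.
have := oU 0 W0 U0W0; rewrite lindE => -[_ /(_ W0N) [K [cK [mK sK]]]].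
pose U' := fun n => [set Some @^-1` W | W in U n].
have oU' : forall n W, U' n W -> open W.
  by move=> n _ [W UW <-]; have := oU n W UW; rewrite lindE => -[].
have cU' : forall n, K `<=` \bigcup_(W in U' n) W.
  move=> n x Kx; have [W UW Wx] := Ucov n (Some x) I.
  by exists (Some @^-1` W) => //; exists W.
have [V' [HV' cov']] := mK U' oU' cU'.
have G : forall nT : nat * set X, exists W : set (lind X),
    U' nT.1 nT.2 -> U nT.1 W /\ Some @^-1` W = nT.2.
  move=> [n T] /=; have [[W UW WT]|nU] := pselect (U' n T).
    by exists W.
  by exists set0.
have [g Hg] := choice G.
exists (fun n => (fun T => g (n, T)) @` V' n `|` (match n with 0 => [set W0] | _ => set0 end)).
split.
  move=> n; have [fin sub] := HV' n; split.
    rewrite finite_setU; split; first exact: finite_image.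
    by case: n {fin sub} => [|n]; [exact: finite_set1|exact: finite_set0].
  move=> W [[T VT <-]|].
    by have [] := Hg (n, T) (sub T VT).
  by case: n {fin sub} => [|n] //= ->.
move=> [x|] _; last by exists 0 => //; exists W0 => //; right.
have [Kx|nKx] := pselect (K x); last first.
  by exists 0 => //; exists W0 => //; [right|apply: sK].
have [n _ [T VT Tx]] := cov' x Kx.
exists n => //; exists (g (n, T)); first by left; exists T.
have [_ e] := Hg (n, T) ((proj2 (HV' n)) T VT).
rewrite /= in e; have : (Some @^-1` g (n, T)) x by rewrite e.
by [].
Qed.

Lemma lind_dense : ~ menger_space X -> dense_embedding (Some : X -> lind X).
Proof.
move=> nM; split; last first.
  move=> Z; case=> o Oo oO; case: o Oo => [x|] Oo.
    by exists (Some x); split=> //; exists x.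
  move: oO; rewrite lindE => -[_ /(_ Oo) [K [_ [mK sK]]]].
  have [x nKx] : exists x, ~ K x.
    apply: contra_notP nM => H; rewrite /menger_space.
    have -> : [set: X] = K by apply/seteqP; split=> // x _; apply: contrapT => nKx; apply: H; exists x.
    exact: mK.
  by exists (Some x); split; [apply: sK|exists x].
split; first by move=> a b [].
split.
  by apply/continuousP => A; rewrite lindE => -[].
move=> U oU; exists (Some @` U); split; first exact: open_img.
apply/seteqP; split=> [y [u Uu <-]|y [] //]; split; by exists u.
Qed.
End Main.

Theorem theorem3p8 (X : topologicalType) :
  locally_menger X -> hausdorff_space X -> P_space X ->
  exists (Y : topologicalType) (f : X -> Y),
    menger_space Y /\ hausdorff_space Y /\ P_space Y /\ dense_embedding f.
Proof.
move=> hL hX hP.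
have [mX|nM] := pselect (menger_space X).
  exists X, id; split=> //; split=> //; split=> //.
  split; last by move=> Z [x Zx] _; exists x; split=> //; exists x.
  split; first by move=> a b.
  split; first by apply/continuousP => A oA; exact: oA.
  move=> U oU; exists U; split=> //; apply/seteqP.
  split=> [y [u Uu <-]|y [Uy _]]; first by split=> //; exists u.
  by exists y.
exists (lind X), Some.
split; first by apply: lind_menger.
split; first by apply: lind_hausdorff.
split; first by apply: lind_P.
by apply: lind_dense.
Qed.
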